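(* Let $x\in\tilde W$ lie in the shrunken Weyl chambers, i.e. $k(a,x\mathbf a)\neq k(a,\mathbf a)$ for all $a\in\Sigma$. If $x\mathbf a$ is a $(J,w,\delta)$-alcove for some $J\subseteq\mathbb S$ with $\delta(J)=J$ and some $w\in W$, then $\eta_\delta(x)\in W_J$.
   Context: Let $\Bbbk$ be an algebraic closure of a finite field $\mathbb F_q$. Either $F$ is a finite extension of $\mathbb Q_p$ with residue field $\mathbb F_q$ and $L$ the completion of its maximal unramified extension, or $F=\mathbb F_q((\epsilon))$, $L=\Bbbk((\epsilon))$; $\sigma$ the Frobenius of $L/F$. $G$ is a quasi-split connected semisimple group over $F$ splitting over a tamely ramified extension of $L$; $S$ a maximal $L$-split torus defined over $F$, $T$ its centralizer, $\Gamma=\mathrm{Gal}(\bar L/L)$, $\tilde W=N_S(L)/T(L)_1=X_*(T)_\Gamma\rtimes W$ the Iwahori–Weyl group; $\delta$ the automorphism of $\tilde W,W$ induced by $\sigma$. Fix a $\sigma$-stable base alcove $\mathbf a$. $V=X_*(T)_\Gamma\otimes\mathbb R$; $\Sigma$ the reduced root system with affine roots $v\mapsto\langle a,v\rangle+k$, $a\in\Sigma$, $k\in\mathbb Z$; $H_{a,k}=\{v:\langle a,v\rangle=k\}$; $W=W(\Sigma)$. The base alcove lies in the anti-dominant chamber; $\mathbb S$ the corresponding simple roots/simple reflections; $\Sigma^+$ positive roots; for $J\subset\mathbb S$, $\Sigma_J$ the roots spanned by $J$, $\Sigma_J^+=\Sigma_J\cap\Sigma^+$, $W_J$ parabolic subgroup,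 $\tilde W_J=X_*(T)_\Gamma\rtimes W_J$. For an alcove $\mathbf b$ and $a\in\Sigma$, $k(a,\mathbf b)$ is the unique integer $k$ such that $\mathbf b$ lies between $H_{a,k}$ and $H_{a,k-1}$. $x\mathbf a$ is a $(J,w,\delta)$-alcove if (1) $w^{-1}x\delta(w)\in\tilde W_J$ and (2) $k(a,x\mathbf a)\ge k(a,\mathbf a)$ for all $a\in w(\Sigma^+\setminus\Sigma^+_J)$ (equivalently, in group-theoretic terms, $\mathbf U_a(L)\cap xIx^{-1}\subseteq \mathbf U_a(L)\cap I$ for the root subgroups $\mathbf U_a$ of positive relative roots $a$ outside $\Phi_J$, translated by $w$, with $I$ the Iwahori of $\mathbf a$). $\eta_1:\tilde W\to W$ the projection, $\eta_2(x)$ the unique $v\in W$ with $v^{-1}x\mathbf a$ in the dominant chamber, $\eta_\delta(x)=\delta^{-1}(\eta_2(x)^{-1}\eta_1(x))\eta_2(x)$. *)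

(* Defs.v *)
From HB Require Import structures.
From mathcomp Require Import all_boot all_order all_algebra.
From mathcomp Require Import reals.
Set Implicit Arguments. Unset Strict Implicit. Unset Printing Implicit Defensive.
Import Order.TTheory GRing.Theory Num.Theory.
Local Open Scope ring_scope.

Section AffineWeyl.
Variable R : realType.
Variable n : nat.

(* V = R^n as column vectors; V^* as row vectors; linear maps as n x n
   matrices acting on the left. *)

Definition pairing (a : 'rV[R]_n) (v : 'cV[R]_n) : R := (a *m v) 0 0.

Definition refl (ca : 'cV[R]_n) (a : 'rV[R]_n) : 'M[R]_n := 1%:M - ca *m a.

Definition is_int (x : R) : Prop := exists z : int, x = z%:~R.

(* reduced root system Sigma in V^* spanning V^*, with coroot map, positive
   system Splus and its basis S (simple roots). *)
Record root_datum (Sigma : seq 'rV[R]_n) (cor : 'rV[R]_n -> 'cV[R]_n)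
    (Splus S : seq 'rV[R]_n) : Prop := RootDatum {
  rd_nonzero : 0 \notin Sigma;
  rd_span : forall v : 'cV[R]_n,
      (forall a, a \in Sigma -> pairing a v = 0) -> v = 0;
  rd_two : forall a, a \in Sigma -> pairing a (cor a) = 2;
  rd_refl : forall a b, a \in Sigma -> b \in Sigma ->
      b *m refl (cor a) a \in Sigma;
  rd_int : forall a b, a \in Sigma -> b \in Sigma -> is_int (pairing b (cor a));
  rd_reduced : forall a (c : R), a \in Sigma -> c *: a \in Sigma ->
      c = 1 \/ c = -1;
  rd_pos_sub : {subset Splus <= Sigma};
  rd_pos_sign : forall a, a \in Sigma -> (a \in Splus) != (- a \in Splus);
  rd_simple_sub : {subset S <= Splus};
  rd_simple_uniq : uniq S;
  rd_simple_free : forall c : 'rV[R]_n -> R,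
      \sum_(s <- S) c s *: s = 0 -> forall s, s \in S -> c s = 0;
  rd_simple_gen : forall a, a \in Splus ->
      exists c : 'rV[R]_n -> nat, a = \sum_(s <- S) (c s)%:R *: s
}.

Inductive gen_by (G : seq 'rV[R]_n) (cor : 'rV[R]_n -> 'cV[R]_n)
  : 'M[R]_n -> Prop :=
| gen_by1 : gen_by G cor 1%:M
| gen_byS a w : a \in G -> gen_by G cor w -> gen_by G cor (refl (cor a) a *m w).

(* W = W(Sigma);  W_J = gen_by J cor *)
Definition inW (Sigma : seq 'rV[R]_n) cor := gen_by Sigma cor.

(* a lies in Sigma_J : integral span of J *)
Definition in_span_int (J : seq 'rV[R]_n) (a : 'rV[R]_n) : Prop :=
  exists c : 'rV[R]_n -> int, a = \sum_(j <- J) (c j)%:~R *: j.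

(* The translation lattice: image of X_*(T)_Gamma in V. *)
Record lattice_ok (Sigma : seq 'rV[R]_n) (cor : 'rV[R]_n -> 'cV[R]_n)
    (L : 'cV[R]_n -> Prop) : Prop := LatticeOk {
  lat0 : L 0;
  latD : forall x y, L x -> L y -> L (x + y);
  latN : forall x, L x -> L (- x);
  lat_coroot : forall a, a \in Sigma -> L (cor a);
  lat_int : forall a x, a \in Sigma -> L x -> is_int (pairing a x);
  lat_W : forall a x, a \in Sigma -> L x -> L (refl (cor a) a *m x)
}.

(* The Frobenius action theta on V: a linear automorphism stabilizing the
   lattice, the root system and the positive roots (hence the base alcove). *)
Record frobenius_ok (Sigma : seq 'rV[R]_n) (cor : 'rV[R]_n -> 'cV[R]_n)
    (Splus : seq 'rV[R]_n) (L : 'cV[R]_n -> Prop) (theta : 'M[R]_n) : Prop :=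
  FrobOk {
  frob_unit : theta \in unitmx;
  frob_pos : forall a, a \in Splus -> a *m invmx theta \in Splus;
  frob_coroot : forall a, a \in Sigma ->
      theta *m cor a = cor (a *m invmx theta);
  frob_lat : forall x, L x -> L (theta *m x)
}.

Definition delta (theta w : 'M[R]_n) : 'M[R]_n := theta *m w *m invmx theta.
Definition delta_inv (theta w : 'M[R]_n) : 'M[R]_n := invmx theta *m w *m theta.

(* base alcove: in the anti-dominant chamber, with 0 in its closure *)
Definition base_alcove (Splus : seq 'rV[R]_n) (p : 'cV[R]_n) : Prop :=
  forall a, a \in Splus -> -1 < pairing a p /\ pairing a p < 0.

Definition dominant (Splus : seq 'rV[R]_n) (p : 'cV[R]_n) : Prop :=
  forall a, a \in Splus -> 0 < pairing a p.

(* the alcove x a, for x = t^lam u in the Iwahori-Weyl group *)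
Definition xalcove (Splus : seq 'rV[R]_n) (lam : 'cV[R]_n) (u : 'M[R]_n)
  (q : 'cV[R]_n) : Prop :=
  exists p, base_alcove Splus p /\ q = lam + u *m p.

(* "k(a, B) = k" : B lies between H_{a,k} and H_{a,k-1} *)
Definition is_k (a : 'rV[R]_n) (B : 'cV[R]_n -> Prop) (k : int) : Prop :=
  forall p, B p -> (k%:~R - 1 < pairing a p) /\ pairing a p < k%:~R.

Definition shrunken (Sigma Splus : seq 'rV[R]_n) (lam : 'cV[R]_n) (u : 'M[R]_n) : Prop :=
  forall a, a \in Sigma -> forall k1 k2 : int,
    is_k a (xalcove Splus lam u) k1 -> is_k a (base_alcove Splus) k2 -> k1 != k2.

Definition JWdelta_alcove (cor : 'rV[R]_n -> 'cV[R]_n) (Splus : seq 'rV[R]_n) (theta : 'M[R]_n) (J : seq 'rV[R]_n)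
  (w : 'M[R]_n) (lam : 'cV[R]_n) (u : 'M[R]_n) : Prop :=
  gen_by J cor (invmx w *m u *m delta theta w) /\
  forall b, b \in Splus -> ~ in_span_int J b ->
    forall k1 k2 : int,
      is_k (b *m invmx w) (xalcove Splus lam u) k1 ->
      is_k (b *m invmx w) (base_alcove Splus) k2 -> k2 <= k1.

(* eta_delta(x) = delta^{-1}(eta_2(x)^{-1} eta_1(x)) eta_2(x), with
   eta_1(x) = u and eta_2(x) = v *)
Definition eta_delta (theta u v : 'M[R]_n) : 'M[R]_n :=
  delta_inv theta (invmx v *m u) *m v.

End AffineWeyl.

(* Main.v *)
Require Import Defs.
From HB Require Import structures.
From mathcomp Require Import all_boot all_order all_algebra.
From mathcomp Require Import reals.
From mathcomp Require Import ring lra zify.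
From Stdlib Require Import Classical.
Set Implicit Arguments. Unset Strict Implicit. Unset Printing Implicit Defensive.
Import Order.TTheory GRing.Theory Num.Theory.
Local Open Scope ring_scope.
Lemma mulmx_rc (R : realType) n (a : 'rV[R]_n) (c : 'cV[R]_n) :
  a *m c = (pairing a c)%:M.
Proof. by rewrite /pairing {1}[a *m c]mx11_scalar. Qed.

Lemma pairingDl (R : realType) n (a b : 'rV[R]_n) (c : 'cV[R]_n) :
  pairing (a + b) c = pairing a c + pairing b c.
Proof. by rewrite /pairing mulmxDl mxE. Qed.
Lemma pairingNl (R : realType) n (a : 'rV[R]_n) (c : 'cV[R]_n) :
  pairing (- a) c = - pairing a c.
Proof. by rewrite /pairing mulNmx mxE. Qed.
Lemma pairingBl (R : realType) n (a b : 'rV[R]_n) (c : 'cV[R]_n) :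
  pairing (a - b) c = pairing a c - pairing b c.
Proof. by rewrite pairingDl pairingNl. Qed.
Lemma pairingZl (R : realType) n (k : R) (a : 'rV[R]_n) (c : 'cV[R]_n) :
  pairing (k *: a) c = k * pairing a c.
Proof. by rewrite /pairing -scalemxAl mxE. Qed.
Lemma pairingDr (R : realType) n (a : 'rV[R]_n) (b c : 'cV[R]_n) :
  pairing a (b + c) = pairing a b + pairing a c.
Proof. by rewrite /pairing mulmxDr mxE. Qed.
Lemma pairingNr (R : realType) n (a : 'rV[R]_n) (c : 'cV[R]_n) :
  pairing a (- c) = - pairing a c.
Proof. by rewrite /pairing mulmxN mxE. Qed.
Lemma pairingBr (R : realType) n (a : 'rV[R]_n) (b c : 'cV[R]_n) :
  pairing a (b - c) = pairing a b - pairing a c.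
Proof. by rewrite pairingDr pairingNr. Qed.
Lemma pairingZr (R : realType) n (k : R) (a : 'rV[R]_n) (c : 'cV[R]_n) :
  pairing a (k *: c) = k * pairing a c.
Proof. by rewrite /pairing -scalemxAr mxE. Qed.
Lemma pairingM (R : realType) n (a : 'rV[R]_n) (M : 'M[R]_n) (c : 'cV[R]_n) :
  pairing (a *m M) c = pairing a (M *m c).
Proof. by rewrite /pairing mulmxA. Qed.
Lemma pairing0l (R : realType) n (c : 'cV[R]_n) : pairing 0 c = 0.
Proof. by rewrite /pairing mul0mx mxE. Qed.
Lemma pairing0r (R : realType) n (a : 'rV[R]_n) : pairing a 0 = 0.
Proof. by rewrite /pairing mulmx0 mxE. Qed.
Lemma pairing_suml (R : realType) n (I : Type) (r : seq I) (P : pred I) (F : I -> 'rV[R]_n) c :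
  pairing (\sum_(i <- r | P i) F i) c = \sum_(i <- r | P i) pairing (F i) c.
Proof.
elim/big_rec2: _ => [|i y1 y2 _ <-]; first by rewrite pairing0l.
by rewrite pairingDl.
Qed.

Lemma refl_row (R : realType) n (a b : 'rV[R]_n) (c : 'cV[R]_n) :
  b *m refl c a = b - pairing b c *: a.
Proof. by rewrite /refl mulmxBr mulmx1 mulmxA mulmx_rc mul_scalar_mx. Qed.

Lemma refl_col (R : realType) n (a : 'rV[R]_n) (c x : 'cV[R]_n) :
  refl c a *m x = x - pairing a x *: c.
Proof. by rewrite /refl mulmxBl mul1mx -mulmxA mulmx_rc mul_mx_scalar. Qed.

Lemma refl_sq (R : realType) n (a : 'rV[R]_n) (c : 'cV[R]_n) :
  pairing a c = 2 -> refl c a *m refl c a = 1%:M.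
Proof.
move=> h; apply/row_matrixP => i; rewrite -[X in X *m _]mul1mx !row_mul !refl_row.
rewrite pairingBl pairingZl h; apply/rowP => j; rewrite !mxE; ring.
Qed.

Lemma refl_unit (R : realType) n (a : 'rV[R]_n) (c : 'cV[R]_n) :
  pairing a c = 2 -> refl c a \in unitmx.
Proof. by move=> h; case: (mulmx1_unit (refl_sq h)). Qed.

Lemma refl_inv (R : realType) n (a : 'rV[R]_n) (c : 'cV[R]_n) :
  pairing a c = 2 -> invmx (refl c a) = refl c a.
Proof.
move=> h; rewrite -[LHS]mulmx1 -(refl_sq h) mulmxA mulVmx ?mul1mx //.
exact: refl_unit.
Qed.

Lemma invmx_mul (R : realType) n (A B : 'M[R]_n) :
  A \in unitmx -> B \in unitmx -> invmx (A *m B) = invmx B *m invmx A.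
Proof.
move=> uA uB; have uAB : A *m B \in unitmx by rewrite unitmx_mul uA uB.
have e : A *m B *m (invmx B *m invmx A) = 1%:M.
  by rewrite -mulmxA (mulmxA B) mulmxV // mul1mx mulmxV.
by rewrite -[LHS]mulmx1 -e mulmxA mulVmx // mul1mx.
Qed.
Lemma gen_by_mul (R : realType) n (G : seq 'rV[R]_n) cor w1 w2 :
  gen_by G cor w1 -> gen_by G cor w2 -> gen_by G cor (w1 *m w2).
Proof.
elim=> [|a w aG _ IH] h2; first by rewrite mul1mx.
by rewrite -mulmxA; apply: gen_byS => //; apply: IH.
Qed.

Lemma gen_by_refl (R : realType) n (G : seq 'rV[R]_n) cor a :
  a \in G -> gen_by G cor (refl (cor a) a).
Proof. by move=> aG; rewrite -[refl _ _]mulmx1; apply: gen_byS => //; apply: gen_by1. Qed.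

Lemma gen_by_sub (R : realType) n (G H : seq 'rV[R]_n) cor w :
  {subset G <= H} -> gen_by G cor w -> gen_by H cor w.
Proof. by move=> sGH; elim=> [|a w' aG _ IH]; [apply: gen_by1 | apply: gen_byS => //; apply: sGH]. Qed.

Lemma gen_by_unit (R : realType) n (G : seq 'rV[R]_n) cor w :
  (forall a, a \in G -> pairing a (cor a) = 2) -> gen_by G cor w -> w \in unitmx.
Proof.
move=> h2; elim=> [|a w' aG _ IH]; first exact: unitmx1.
by rewrite unitmx_mul IH refl_unit ?h2.
Qed.

Lemma gen_by_inv (R : realType) n (G : seq 'rV[R]_n) cor w :
  (forall a, a \in G -> pairing a (cor a) = 2) -> gen_by G cor w -> gen_by G cor (invmx w).
Proof.
move=> h2; elim=> [|a w' aG gw IH]; first by rewrite invmx1; apply: gen_by1.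
rewrite invmx_mul ?refl_unit ?h2 //; last exact: (gen_by_unit h2).
rewrite refl_inv ?h2 //; apply: gen_by_mul => //; exact: gen_by_refl.
Qed.

Definition prodR (R : realType) n (cor : 'rV[R]_n -> 'cV[R]_n) (l : seq 'rV[R]_n) : 'M[R]_n :=
  foldr (fun a m => refl (cor a) a *m m) 1%:M l.

Lemma prodR_cat (R : realType) n (cor : 'rV[R]_n -> 'cV[R]_n) l1 l2 :
  prodR cor (l1 ++ l2) = prodR cor l1 *m prodR cor l2.
Proof. by elim: l1 => [|a l IH] /=; rewrite ?mul1mx // IH mulmxA. Qed.

Lemma gen_by_word (R : realType) n (G : seq 'rV[R]_n) cor w :
  gen_by G cor w <-> exists l, {subset l <= G} /\ w = prodR cor l.
Proof.
split.
  elim=> [|a w' aG _ [l [sl ->]]]; first by exists [::].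
  exists (a :: l); split => //= x; rewrite inE => /orP[/eqP->//|]; exact: sl.
case=> l [sl ->]; elim: l sl => [|a l IH] sl /=; first exact: gen_by1.
apply: gen_byS; first by apply: sl; rewrite inE eqxx.
by apply: IH => x xl; apply: sl; rewrite inE xl orbT.
Qed.

Lemma rowW (R : realType) n (Sigma : seq 'rV[R]_n) cor Splus S w b :
  root_datum Sigma cor Splus S -> gen_by Sigma cor w -> b \in Sigma -> b *m w \in Sigma.
Proof.
move=> RD gw; elim: gw b => [|a w' aS _ IH] b bS; first by rewrite mulmx1.
by rewrite mulmxA; apply: IH; apply: (rd_refl RD).
Qed.
Definition Bf (R : realType) n (Sigma : seq 'rV[R]_n) (x y : 'cV[R]_n) : R :=
  \sum_(a <- undup Sigma) pairing a x * pairing a y.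

Lemma BfC (R : realType) n (Sigma : seq 'rV[R]_n) x y : Bf Sigma x y = Bf Sigma y x.
Proof. by apply: eq_bigr => a _; rewrite mulrC. Qed.

Lemma BfDl (R : realType) n (Sigma : seq 'rV[R]_n) x y z :
  Bf Sigma (x + y) z = Bf Sigma x z + Bf Sigma y z.
Proof. by rewrite /Bf -big_split; apply: eq_bigr => a _; rewrite pairingDr mulrDl. Qed.
Lemma BfNl (R : realType) n (Sigma : seq 'rV[R]_n) x z :
  Bf Sigma (- x) z = - Bf Sigma x z.
Proof. by rewrite /Bf -sumrN; apply: eq_bigr => a _; rewrite pairingNr mulNr. Qed.
Lemma BfBl (R : realType) n (Sigma : seq 'rV[R]_n) x y z :
  Bf Sigma (x - y) z = Bf Sigma x z - Bf Sigma y z.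
Proof. by rewrite BfDl BfNl. Qed.
Lemma BfZl (R : realType) n (Sigma : seq 'rV[R]_n) k x z :
  Bf Sigma (k *: x) z = k * Bf Sigma x z.
Proof. by rewrite /Bf mulr_sumr; apply: eq_bigr => a _; rewrite pairingZr mulrA. Qed.

Lemma Bf_def (R : realType) n (Sigma : seq 'rV[R]_n) cor Splus S x :
  root_datum Sigma cor Splus S -> Bf Sigma x x = 0 -> x = 0.
Proof.
move=> RD h; apply: (rd_span RD) => a aS.
move/eqP: h; rewrite /Bf psumr_eq0; last by move=> b _; rewrite -expr2 sqr_ge0.
move/allP/(_ a); rewrite mem_undup aS => /(_ isT) /= /eqP /eqP.
by rewrite mulf_eq0 orbb => /eqP.
Qed.
Lemma Bf_inv (R : realType) n (Sigma : seq 'rV[R]_n) (t : 'M[R]_n) x y :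
  t *m t = 1%:M -> (forall b, b \in Sigma -> b *m t \in Sigma) ->
  Bf Sigma (t *m x) (t *m y) = Bf Sigma x y.
Proof.
move=> tt st; rewrite /Bf.
have -> : \sum_(a <- undup Sigma) pairing a (t *m x) * pairing a (t *m y) =
          \sum_(a <- map (fun b => b *m t) (undup Sigma)) pairing a x * pairing a y.
  by rewrite big_map; apply: eq_bigr => a _; rewrite !pairingM.
apply: perm_big; apply: uniq_perm; rewrite ?undup_uniq //.
  rewrite map_inj_uniq ?undup_uniq // => a b e.
  by rewrite -[a]mulmx1 -[b]mulmx1 -tt !mulmxA e.
move=> a; apply/mapP/idP.
  by case=> b; rewrite !mem_undup => bS ->; apply: st.
rewrite mem_undup => aS; exists (a *m t); first by rewrite mem_undup st.
by rewrite -mulmxA tt mulmx1.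
Qed.

Lemma refl_form (R : realType) n (Sigma : seq 'rV[R]_n) (a : 'rV[R]_n) (c : 'cV[R]_n) x :
  pairing a c = 2 -> (forall b, b \in Sigma -> b *m refl c a \in Sigma) ->
  2 * Bf Sigma c x = Bf Sigma c c * pairing a x.
Proof.
move=> h st; have := Bf_inv x c (refl_sq h) st.
have -> : refl c a *m c = - c.
  by rewrite refl_col h; apply/matrixP => i j; rewrite !mxE; ring.
rewrite refl_col BfBl BfZl !(BfC _ _ (- c)) !BfNl (BfC _ x c) => e.
lra.
Qed.

Lemma coroot_unique (R : realType) n (Sigma : seq 'rV[R]_n) cor Splus S a c :
  root_datum Sigma cor Splus S -> a \in Sigma -> pairing a c = 2 ->
  (forall b, b \in Sigma -> b *m refl c a \in Sigma) -> c = cor a.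
Proof.
move=> RD aS h st.
have h0 := rd_two RD aS.
have st0 : forall b, b \in Sigma -> b *m refl (cor a) a \in Sigma.
  by move=> b bS; apply: (rd_refl RD).
have F := fun x => refl_form x h st.
have F0 := fun x => refl_form x h0 st0.
have kn : forall d, pairing a d = 2 -> Bf Sigma d d != 0.
  move=> d hd; apply/eqP => /(Bf_def RD) d0; move: hd; rewrite d0 pairing0r => e.
  by move: (e); lra.
have kc := kn c h; have k0 := kn _ h0.
set y := Bf Sigma (cor a) (cor a) *: c - Bf Sigma c c *: cor a.
have y0 : y = 0.
  apply: (Bf_def RD); rewrite {1}/y BfBl !BfZl.
  have e1 : Bf Sigma c y = Bf Sigma c c * pairing a y / 2 by rewrite -F; field.
  have e2 : Bf Sigma (cor a) y = Bf Sigma (cor a) (cor a) * pairing a y / 2 by rewrite -F0; field.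
  rewrite e1 e2; ring.
have e : Bf Sigma (cor a) (cor a) = Bf Sigma c c.
  by have := f_equal (pairing a) y0; rewrite /y pairing0r pairingBr !pairingZr h h0; lra.
move: y0; rewrite /y e -scalerBr => /eqP; rewrite scaler_eq0 (negbTE kc) /= subr_eq0.
by move/eqP.
Qed.
Lemma neg_root (R : realType) n (Sigma : seq 'rV[R]_n) cor Splus S a :
  root_datum Sigma cor Splus S -> a \in Sigma -> - a \in Sigma.
Proof.
move=> RD aS; have := rd_refl RD aS aS; rewrite refl_row (rd_two RD aS).
by have -> : a - 2 *: a = - a by apply/matrixP => i j; rewrite !mxE; ring.
Qed.

Lemma cor_neg (R : realType) n (Sigma : seq 'rV[R]_n) cor Splus S a :
  root_datum Sigma cor Splus S -> a \in Sigma -> cor (- a) = - cor a.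
Proof.
move=> RD aS; symmetry; apply: (coroot_unique RD (neg_root RD aS)).
  by rewrite pairingNl pairingNr opprK (rd_two RD aS).
by move=> b bS; rewrite /refl mulmxN mulNmx opprK; apply: (rd_refl RD).
Qed.

Lemma refl_neg (R : realType) n (Sigma : seq 'rV[R]_n) cor Splus S a :
  root_datum Sigma cor Splus S -> a \in Sigma -> refl (cor (- a)) (- a) = refl (cor a) a.
Proof. by move=> RD aS; rewrite (cor_neg RD aS) /refl mulmxN mulNmx opprK. Qed.

Lemma refl_conjmx (R : realType) n (s : 'M[R]_n) c a :
  s *m s = 1%:M -> refl (s *m c) (a *m s) = s *m refl c a *m s.
Proof. by move=> ss; rewrite /refl mulmxBr mulmx1 mulmxBl ss -!mulmxA. Qed.

Lemma cor_refl (R : realType) n (Sigma : seq 'rV[R]_n) cor Splus S a b :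
  root_datum Sigma cor Splus S -> a \in Sigma -> b \in Sigma ->
  cor (a *m refl (cor b) b) = refl (cor b) b *m cor a.
Proof.
move=> RD aS bS; set s := refl (cor b) b.
have ss : s *m s = 1%:M by apply: refl_sq; apply: (rd_two RD).
symmetry; apply: (coroot_unique RD); first exact: (rd_refl RD).
  by rewrite pairingM mulmxA ss mul1mx (rd_two RD).
move=> d dS.
have -> : refl (s *m cor a) (a *m s) = s *m refl (cor a) a *m s.
  exact: refl_conjmx.
rewrite !mulmxA; apply: (rd_refl RD) => //; apply: (rd_refl RD) => //.
exact: (rd_refl RD).
Qed.

Lemma refl_conj (R : realType) n (Sigma : seq 'rV[R]_n) cor Splus S a b :
  root_datum Sigma cor Splus S -> a \in Sigma -> b \in Sigma ->
  refl (cor (a *m refl (cor b) b)) (a *m refl (cor b) b) =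
  refl (cor b) b *m refl (cor a) a *m refl (cor b) b.
Proof.
move=> RD aS bS; rewrite (cor_refl RD aS bS); set s := refl (cor b) b.
have ss : s *m s = 1%:M by apply: refl_sq; apply: (rd_two RD).
exact: refl_conjmx.
Qed.
Definition comb (R : realType) n (S : seq 'rV[R]_n) (f : 'rV[R]_n -> R) : 'rV[R]_n :=
  \sum_(s <- S) f s *: s.

Lemma free_eq (R : realType) n (Sigma : seq 'rV[R]_n) cor Splus S f g :
  root_datum Sigma cor Splus S -> comb S f = comb S g -> forall s, s \in S -> f s = g s.
Proof.
move=> RD e s sS; apply/eqP; rewrite -subr_eq0; apply/eqP.
apply: (rd_simple_free RD (c := fun s => f s - g s)) => //.
under eq_bigr do rewrite scalerBl.
by rewrite sumrB -/(comb S f) e subrr.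
Qed.

Lemma comb_pred1 (R : realType) n (S : seq 'rV[R]_n) f a :
  uniq S -> a \in S -> (forall s, s \in S -> s != a -> f s = 0) -> comb S f = f a *: a.
Proof.
move=> uS aS h; rewrite /comb (bigD1_seq a) //= big1_seq ?addr0 //.
by move=> s /andP[sa sS]; rewrite h // scale0r.
Qed.

Definition cone (R : realType) n (S : seq 'rV[R]_n) (x : 'rV[R]_n) : Prop :=
  exists f, (forall s, 0 <= f s) /\ x = comb S f.

Lemma cone0 (R : realType) n (S : seq 'rV[R]_n) : cone S 0.
Proof. by exists (fun _ => 0); split => //; rewrite /comb big1 // => s _; rewrite scale0r. Qed.

Lemma coneD (R : realType) n (S : seq 'rV[R]_n) x y : cone S x -> cone S y -> cone S (x + y).
Proof.
case=> f [f0 ->] [g [g0 ->]]; exists (fun s => f s + g s); split.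
  by move=> s; rewrite addr_ge0.
by rewrite /comb -big_split; apply: eq_bigr => s _; rewrite scalerDl.
Qed.

Lemma coneZ (R : realType) n (S : seq 'rV[R]_n) k x : 0 <= k -> cone S x -> cone S (k *: x).
Proof.
move=> k0 [f [f0 ->]]; exists (fun s => k * f s); split.
  by move=> s; rewrite mulr_ge0.
by rewrite /comb scaler_sumr; apply: eq_bigr => s _; rewrite scalerA.
Qed.

Lemma cone_sum (R : realType) n (S : seq 'rV[R]_n) (I : Type) (r : seq I) (F : I -> 'rV[R]_n) :
  (forall i, cone S (F i)) -> cone S (\sum_(i <- r) F i).
Proof.
move=> h; elim: r => [|i r IH]; first by rewrite big_nil; apply: cone0.
by rewrite big_cons; apply: coneD.
Qed.

Lemma pos_cone (R : realType) n (Sigma : seq 'rV[R]_n) cor Splus S a :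
  root_datum Sigma cor Splus S -> a \in Splus -> cone S a.
Proof.
by move=> RD /(rd_simple_gen RD) [c ->]; exists (fun s => (c s)%:R); split => // s; rewrite ler0n.
Qed.

Lemma neg_pos (R : realType) n (Sigma : seq 'rV[R]_n) cor Splus S a :
  root_datum Sigma cor Splus S -> a \in Sigma -> a \notin Splus -> - a \in Splus.
Proof. by move=> RD aS; have := rd_pos_sign RD aS; case: (a \in Splus); case: (- a \in Splus). Qed.

Lemma pos_neg (R : realType) n (Sigma : seq 'rV[R]_n) cor Splus S a :
  root_datum Sigma cor Splus S -> a \in Sigma -> a \in Splus -> - a \notin Splus.
Proof. by move=> RD aS; have := rd_pos_sign RD aS; case: (a \in Splus); case: (- a \in Splus). Qed.

Lemma cone_root_pos (R : realType) n (Sigma : seq 'rV[R]_n) cor Splus S r :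
  root_datum Sigma cor Splus S -> r \in Sigma -> cone S r -> r \in Splus.
Proof.
move=> RD rS [f [f0 er]]; apply/negPn/negP => rn.
have [g [g0 eg]] := pos_cone RD (neg_pos RD rS rn).
have e : comb S (fun s => f s + g s) = comb S (fun _ => 0).
  rewrite {2}/comb big1 => [|s _]; last by rewrite scale0r.
  rewrite /comb.
  by under eq_bigr do rewrite scalerDl; rewrite big_split /= -/(comb S f) -/(comb S g) -er -eg subrr.
have gz : forall s, s \in S -> g s = 0.
  move=> s sS; have := free_eq RD e sS; have := f0 s; have := g0 s; lra.
have : - r = 0.
  by rewrite eg /comb big1_seq // => s /andP[_ sS]; rewrite gz // scale0r.
move/eqP; rewrite oppr_eq0 => /eqP r0.
by have := rd_nonzero RD; rewrite -r0 rS.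
Qed.
Lemma simple_root (R : realType) n (Sigma : seq 'rV[R]_n) cor Splus S a :
  root_datum Sigma cor Splus S -> a \in S -> a \in Sigma.
Proof. by move=> RD aS; apply: (rd_pos_sub RD); apply: (rd_simple_sub RD). Qed.

Lemma simple_refl_perm (R : realType) n (Sigma : seq 'rV[R]_n) cor Splus S a b :
  root_datum Sigma cor Splus S -> a \in S -> b \in Splus -> b != a ->
  b *m refl (cor a) a \in Splus.
Proof.
move=> RD aS bP ba.
have aSig := simple_root RD aS; have bSig := rd_pos_sub RD bP.
have bsS : b *m refl (cor a) a \in Sigma by apply: (rd_refl RD).
apply/negPn/negP => bn.
have [c ec] := rd_simple_gen RD bP.
have [d ed] := rd_simple_gen RD (neg_pos RD bsS bn).
set k := pairing b (cor a).
have ek : \sum_(s <- S) (if s == a then k else 0) *: s = k *: a.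
  have := comb_pred1 (f := fun s => if s == a then k else 0) (rd_simple_uniq RD) aS.
  rewrite eqxx; apply => s _ sa; by rewrite (negbTE sa).
have e : comb S (fun s => (c s)%:R + (d s)%:R - (if s == a then k else 0)) = comb S (fun _ => 0).
  rewrite {2}/comb big1 => [|s _]; last by rewrite scale0r.
  rewrite /comb; under eq_bigr do rewrite scalerBl scalerDl.
  rewrite sumrB big_split /= -ec -ed ek refl_row -/k.
  by apply/rowP => j; rewrite !mxE; ring.
have cz : forall s, s \in S -> s != a -> c s = 0%N.
  move=> s sS sa; have := free_eq RD e sS; rewrite (negbTE sa) subr0 => h.
  have := ler0n R (c s); have := ler0n R (d s).
  by move/eqP: h; rewrite paddr_eq0 ?ler0n // pnatr_eq0 => /andP[/eqP].
have eb : b = (c a)%:R *: a.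
  rewrite ec; have := comb_pred1 (f := fun s => (c s)%:R) (rd_simple_uniq RD) aS.
  by apply => s sS sa; rewrite cz.
have [h|h] : ((c a)%:R : R) = 1 \/ ((c a)%:R : R) = -1.
  by apply: (rd_reduced RD aSig (c := (c a)%:R)); rewrite -eb.
  by move: ba; rewrite eb h scale1r eqxx.
by have := ler0n R (c a); rewrite h; lra.
Qed.

Lemma all_simple_pos (R : realType) n (Sigma : seq 'rV[R]_n) cor Splus S y :
  root_datum Sigma cor Splus S -> gen_by Sigma cor y ->
  (forall a, a \in S -> a *m y \in Splus) -> forall b, b \in Splus -> b *m y \in Splus.
Proof.
move=> RD gy h b bP; apply: (cone_root_pos RD).
  by apply: (rowW RD gy); apply: (rd_pos_sub RD).
have [c ->] := rd_simple_gen RD bP.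
rewrite mulmx_suml.
have -> : \sum_(s <- S) (c s)%:R *: s *m y = \sum_(s <- S) (if s \in S then (c s)%:R *: (s *m y) else 0).
  by rewrite big_seq_cond [RHS]big_seq_cond; apply: eq_bigr => s /andP[-> _]; rewrite scalemxAl.
apply: cone_sum => s; case: ifP => sS; last exact: cone0.
by apply: coneZ; [rewrite ler0n | apply: (pos_cone RD); apply: h].
Qed.
Lemma refl_self (R : realType) n (a : 'rV[R]_n) (c : 'cV[R]_n) :
  pairing a c = 2 -> a *m refl c a = - a.
Proof. by move=> h; rewrite refl_row h; apply/rowP => j; rewrite !mxE; ring. Qed.

Lemma exchange_word (R : realType) n (Sigma : seq 'rV[R]_n) cor Splus S l :
  root_datum Sigma cor Splus S -> {subset l <= S} ->
  forall a, a \in Splus -> a *m prodR cor l \notin Splus ->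
  exists l1 l2 b, l = l1 ++ b :: l2 /\ refl (cor a) a *m prodR cor l = prodR cor (l1 ++ l2).
Proof.
move=> RD; elim: l => [|b l IH] sl a aP /=; first by rewrite mulmx1 aP.
have bS : b \in S by apply: sl; rewrite inE eqxx.
have sl' : {subset l <= S} by move=> x xl; apply: sl; rewrite inE xl orbT.
have bSig := simple_root RD bS; have aSig := rd_pos_sub RD aP.
case: (eqVneq a b) => [->|ab] an.
  exists [::], l, b; split => //=.
  by rewrite mulmxA refl_sq ?mul1mx // (rd_two RD).
have a'P := simple_refl_perm RD bS aP ab.
have [|l1 [l2 [g [el e]]]] := IH sl' _ a'P; first by rewrite -mulmxA.
exists (b :: l1), l2, g; split; first by rewrite el.
rewrite (refl_conj RD aSig bSig) in e.
have sb : refl (cor b) b *m refl (cor b) b = 1%:M by apply: refl_sq; apply: (rd_two RD).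
rewrite /= -e !mulmxA sb mul1mx.
by rewrite -!mulmxA.
Qed.
Lemma pos_pres_one (R : realType) n (Sigma : seq 'rV[R]_n) cor Splus S l :
  root_datum Sigma cor Splus S -> {subset l <= S} ->
  (forall b, b \in Splus -> b *m prodR cor l \in Splus) -> prodR cor l = 1%:M.
Proof.
move=> RD; move: {2}(size l) (leqnn (size l)) => m; elim: m l => [|m IH] [|a l] //= hs sl h.
have aS : a \in S by apply: sl; rewrite inE eqxx.
have sl' : {subset l <= S} by move=> x xl; apply: sl; rewrite inE xl orbT.
have aP := rd_simple_sub RD aS; have aSig := simple_root RD aS.
have ha := h a aP; rewrite /= in ha.
have an : a *m prodR cor l \notin Splus.
  have e : a *m prodR cor l = - (a *m (refl (cor a) a *m prodR cor l)).
    by rewrite mulmxA refl_self ?(rd_two RD) // mulNmx opprK.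
  rewrite e; apply: (pos_neg RD) => //; apply: (rowW RD) => //.
  by apply/gen_by_word; exists (a :: l); split => // x /sl; apply: (simple_root RD).
have [l1 [l2 [g [el e]]]] := exchange_word RD sl' aP an.
rewrite e; apply: IH.
- by move: hs; rewrite el !size_cat /= addnS ltnS => /ltnW.
- move=> x xl; apply: sl'; rewrite el mem_cat inE; move: xl; rewrite mem_cat.
  by case/orP=> ->; rewrite ?orbT.
- by move=> b bP; rewrite -e; apply: h.
Qed.

Lemma span_add (R : realType) n (J : seq 'rV[R]_n) x y :
  in_span_int J x -> in_span_int J y -> in_span_int J (x + y).
Proof.
case=> c -> [d ->]; exists (fun j => c j + d j); rewrite -big_split /=.
by apply: eq_bigr => j _; rewrite intrD scalerDl.
Qed.

Lemma span_scale (R : realType) n (J : seq 'rV[R]_n) (z : int) x :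
  in_span_int J x -> in_span_int J (z%:~R *: x).
Proof.
case=> c ->; exists (fun j => z * c j); rewrite scaler_sumr.
by apply: eq_bigr => j _; rewrite scalerA intrM.
Qed.

Lemma sum_to_comb (R : realType) n (J S : seq 'rV[R]_n) (g : 'rV[R]_n -> R) :
  uniq S -> {subset J <= S} ->
  \sum_(j <- J) g j *: j = comb S (fun s => \sum_(j <- J) (if j == s then g j else 0)).
Proof.
move=> uS sJ; rewrite /comb.
under [RHS]eq_bigr do rewrite scaler_suml.
rewrite exchange_big /=; apply: eq_big_seq => j jJ; symmetry.
have := comb_pred1 (f := fun s => if j == s then g j else 0) uS (sJ _ jJ).
rewrite eqxx; apply => s _; rewrite eq_sym => /negbTE ->.
by [].
Qed.
Lemma span_simple_in (R : realType) n (Sigma : seq 'rV[R]_n) cor Splus S J a :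
  root_datum Sigma cor Splus S -> {subset J <= S} -> a \in S -> in_span_int J a -> a \in J.
Proof.
move=> RD sJ aS [c e].
rewrite (sum_to_comb _ (rd_simple_uniq RD) sJ) in e.
have e1 : a = comb S (fun s => if s == a then 1 else 0).
  have := comb_pred1 (f := fun s => if s == a then 1 else 0) (rd_simple_uniq RD) aS.
  rewrite eqxx scale1r => ->// s _ /negbTE ->; by [].
have := free_eq RD (etrans (esym e) e1) aS; rewrite eqxx.
move=> hf; apply/negPn/negP => aJ; move: hf; rewrite big1_seq.
  by move/eqP; rewrite eq_sym oner_eq0.
by move=> j /andP[_ jJ]; case: eqP => // ja; move: aJ; rewrite -ja jJ.
Qed.

Lemma main_word (R : realType) n (Sigma : seq 'rV[R]_n) cor Splus S J l :
  root_datum Sigma cor Splus S -> {subset J <= S} -> {subset l <= S} ->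
  (forall b, b \in Splus -> ~ in_span_int J b -> b *m prodR cor l \in Splus) ->
  gen_by J cor (prodR cor l).
Proof.
move=> RD sJ; move: {2}(size l) (leqnn (size l)) => m.
elim: m l => [|m IH] l hs sl h.
  by case: l hs {sl h} => //= _; apply: gen_by1.
have gy : gen_by Sigma cor (prodR cor l).
  by apply/gen_by_word; exists l; split => // x /sl; apply: (simple_root RD).
case: (boolP (has (fun a => a *m prodR cor l \notin Splus) S)); last first.
  move/hasPn => hn; rewrite (pos_pres_one RD sl); first exact: gen_by1.
  apply: (all_simple_pos RD gy) => a aS; have := hn a aS; by rewrite negbK.
case/hasP => a aS an.
have spa : in_span_int J a.
  apply: NNPP => hsp.
  by move: an; rewrite h // (rd_simple_sub RD).
have aJ : a \in J by apply: (span_simple_in RD sJ aS).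
have aSig := simple_root RD aS.
have [l1 [l2 [g [el e]]]] := exchange_word RD sl (rd_simple_sub RD aS) an.
have -> : prodR cor l = refl (cor a) a *m prodR cor (l1 ++ l2).
  by rewrite -e mulmxA refl_sq ?mul1mx // (rd_two RD).
apply: gen_byS => //; apply: IH.
- by move: hs; rewrite el !size_cat /= addnS ltnS.
- move=> x xl; apply: sl; rewrite el mem_cat inE; move: xl; rewrite mem_cat.
  by case/orP=> ->; rewrite ?orbT.
move=> b bP bn; rewrite -e mulmxA.
have ba : b != a by apply/eqP => ba; apply: bn; rewrite ba.
apply: h; first exact: (simple_refl_perm RD aS bP ba).
move=> hs2; apply: bn.
have [z ez] := rd_int RD aSig (rd_pos_sub RD bP).
have -> : b = b *m refl (cor a) a + z%:~R *: a.
  by rewrite refl_row -ez subrK.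
by apply: span_add => //; apply: span_scale.
Qed.
Lemma Bf_ge0 (R : realType) n (Sigma : seq 'rV[R]_n) x : 0 <= Bf Sigma x x.
Proof. by apply: sumr_ge0 => a _; rewrite -expr2 sqr_ge0. Qed.

Lemma pairing_sign (R : realType) n (Sigma : seq 'rV[R]_n) cor Splus S a b :
  root_datum Sigma cor Splus S -> a \in Sigma -> b \in Sigma ->
  0 < pairing b (cor a) -> 0 < pairing a (cor b).
Proof.
move=> RD aS bS h.
have sta : forall d, d \in Sigma -> d *m refl (cor a) a \in Sigma by move=> d dS; apply: (rd_refl RD).
have stb : forall d, d \in Sigma -> d *m refl (cor b) b \in Sigma by move=> d dS; apply: (rd_refl RD).
have Fa := fun x => refl_form x (rd_two RD aS) sta.
have Fb := fun x => refl_form x (rd_two RD bS) stb.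
have kpos : forall d, d \in Sigma -> 0 < Bf Sigma (cor d) (cor d).
  move=> d dS; rewrite lt0r Bf_ge0 andbT; apply/eqP => /(Bf_def RD) e.
  by have := rd_two RD dS; rewrite e pairing0r; lra.
have ka := kpos a aS; have kb := kpos b bS.
have e1 := Fa (cor b); have e2 := Fb (cor a).
rewrite BfC in e2.
have : 0 < Bf Sigma (cor a) (cor a) * pairing a (cor b).
  rewrite -e1 e2; by rewrite mulr_gt0.
by rewrite pmulr_rgt0.
Qed.

Lemma refl_in_WS_pos (R : realType) n (Sigma : seq 'rV[R]_n) cor Splus S :
  root_datum Sigma cor Splus S -> forall h a (c : 'rV[R]_n -> nat), a \in Splus ->
  a = \sum_(s <- S) (c s)%:R *: s -> (\sum_(s <- S) c s < h)%N ->
  gen_by S cor (refl (cor a) a).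
Proof.
move=> RD; elim=> [|h IH] a c aP ea hc //.
case: (boolP (a \in S)) => aS; first exact: gen_by_refl.
have aSig := rd_pos_sub RD aP.
have [al alS alp] : exists2 al, al \in S & 0 < pairing al (cor a).
  apply/hasP; apply/negPn/negP => /hasPn hn.
  have : pairing a (cor a) <= 0.
    rewrite {1}ea pairing_suml big_seq; apply: sumr_le0 => s sS.
    rewrite pairingZl; apply: mulr_ge0_le0; first by rewrite ler0n.
    by have := hn s sS; rewrite -leNgt.
  by rewrite (rd_two RD aSig); lra.
have alSig := simple_root RD alS.
have kp := pairing_sign RD aSig alSig alp.
have [z ez] := rd_int RD alSig aSig.
have ane : a != al by apply/eqP => e; move: aS; rewrite e alS.
have a'P := simple_refl_perm RD alS aP ane.
have [c' ec'] := rd_simple_gen RD a'P.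
set dl := fun s => if s == al then (z%:~R : R) else 0.
have sdl : \sum_(s <- S) dl s = z%:~R.
  rewrite (bigD1_seq al) //= ?(rd_simple_uniq RD) // /dl eqxx big1_seq ?addr0 //.
  by move=> s /andP[/negbTE -> _].
have cdl : \sum_(s <- S) dl s *: s = z%:~R *: al.
  have := comb_pred1 (f := dl) (rd_simple_uniq RD) alS; rewrite /dl eqxx.
  by apply => s _ /negbTE ->.
have ecc : comb S (fun s => (c' s)%:R) = comb S (fun s => (c s)%:R - dl s).
  rewrite /comb -ec'; under eq_bigr do rewrite scalerBl.
  by rewrite sumrB -ea cdl refl_row ez.
have hsum : ((\sum_(s <- S) c' s)%N%:R : R) = (\sum_(s <- S) c s)%N%:R - z%:~R.
  rewrite !natr_sum -sdl -sumrB; apply: eq_big_seq => s sS.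
  exact: (free_eq RD ecc sS).
have lt : (\sum_(s <- S) c' s < \sum_(s <- S) c s)%N.
  by rewrite -(ltr_nat R) hsum -ez; lra.
have gi := IH _ _ a'P ec' (leq_trans lt (hc : (_ < h.+1)%N)).
have -> : refl (cor a) a = refl (cor al) al *m refl (cor (a *m refl (cor al) al)) (a *m refl (cor al) al) *m refl (cor al) al.
  rewrite (refl_conj RD aSig alSig) !mulmxA refl_sq ?(rd_two RD) // mul1mx.
  by rewrite -mulmxA refl_sq ?(rd_two RD) // mulmx1.
by apply: gen_by_mul; [apply: gen_by_mul => // |]; apply: gen_by_refl.
Qed.
Lemma W_in_WS (R : realType) n (Sigma : seq 'rV[R]_n) cor Splus S w :
  root_datum Sigma cor Splus S -> gen_by Sigma cor w -> gen_by S cor w.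
Proof.
move=> RD; elim=> [|a w' aS _ IH]; first exact: gen_by1.
apply: gen_by_mul => //.
have posc : forall b, b \in Splus -> gen_by S cor (refl (cor b) b).
  move=> b bP; have [c ec] := rd_simple_gen RD bP.
  exact: (refl_in_WS_pos RD bP ec (ltnSn _)).
case: (boolP (a \in Splus)) => aP; first exact: posc.
rewrite -(refl_neg RD aS); exact: posc (neg_pos RD aS aP).
Qed.

Lemma main_W (R : realType) n (Sigma : seq 'rV[R]_n) cor Splus S J y :
  root_datum Sigma cor Splus S -> {subset J <= S} -> gen_by Sigma cor y ->
  (forall b, b \in Splus -> ~ in_span_int J b -> b *m y \in Splus) ->
  gen_by J cor y.
Proof.
move=> RD sJ gy h; have /gen_by_word [l [sl ey]] := W_in_WS RD gy.
by rewrite ey; apply: (main_word RD sJ sl); rewrite -ey.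
Qed.
Lemma conj_theta (R : realType) n (Sigma : seq 'rV[R]_n) cor Splus S L theta J g :
  root_datum Sigma cor Splus S -> frobenius_ok Sigma cor Splus L theta ->
  {subset J <= S} -> [seq j *m invmx theta | j <- J] =i J ->
  gen_by J cor g -> gen_by J cor (invmx theta *m g *m theta).
Proof.
move=> RD FO sJ Js; have ut := frob_unit FO.
elim=> [|j w jJ _ IH]; first by rewrite mulmx1 mulVmx //; apply: gen_by1.
have [j' j'J ej] : exists2 j', j' \in J & j = j' *m invmx theta.
  by apply/mapP; rewrite Js.
have jt : j *m theta = j' by rewrite ej -mulmxA mulVmx // mulmx1.
have j'S := simple_root RD (sJ _ j'J).
have ec : invmx theta *m cor j = cor j'.
  have := frob_coroot FO j'S; rewrite -ej => <-.
  by rewrite mulmxA mulVmx // mul1mx.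
have -> : invmx theta *m (refl (cor j) j *m w) *m theta =
          refl (cor j') j' *m (invmx theta *m w *m theta).
  rewrite -ec -jt /refl !mulmxBl !mulmxBr !mul1mx.
  rewrite mulmxBl; congr (_ - _); rewrite !mulmxA; congr (_ *m _).
  by rewrite -!mulmxA (mulmxA theta) mulmxV // mul1mx.
by apply: gen_byS.
Qed.
Lemma alcove_key (R : realType) n (Sigma : seq 'rV[R]_n) cor Splus S L (J : seq 'rV[R]_n)
  (lam : 'cV[R]_n) u w v :
  root_datum Sigma cor Splus S -> lattice_ok Sigma cor L ->
  L lam -> gen_by Sigma cor u -> shrunken Sigma Splus lam u ->
  (forall b, b \in Splus -> ~ in_span_int J b ->
    forall k1 k2 : int,
      is_k (b *m invmx w) (xalcove Splus lam u) k1 ->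
      is_k (b *m invmx w) (base_alcove Splus) k2 -> k2 <= k1) ->
  gen_by Sigma cor w -> gen_by Sigma cor v ->
  (forall q, xalcove Splus lam u q -> dominant Splus (invmx v *m q)) ->
  forall b, b \in Splus -> ~ in_span_int J b -> b *m (invmx w *m v) \in Splus.
Proof.
move=> RD LO Llam gu shr JW gw gv dom b bP bn.
have W2 := rd_two RD.
set c := b *m invmx w.
have cS : c \in Sigma by apply: (rowW RD (gen_by_inv W2 gw)); apply: (rd_pos_sub RD).
case: (classic (exists p, base_alcove Splus p)) => [[p0 bp0]|nob]; last first.
  have := shr c cS 0 0; rewrite eqxx => h; exfalso; apply: notF; apply: h.
    by move=> q [p [bp _]]; exfalso; apply: nob; exists p.
  by move=> p bp; exfalso; apply: nob; exists p.
set k2 : int := if c \in Splus then 0 else 1.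
have hk2 : is_k c (base_alcove Splus) k2.
  move=> p bp; rewrite /k2; case: ifP => cP.
    by have := bp c cP; rewrite /= ?subr0; lra.
  have := bp _ (neg_pos RD cS (negbT cP)); rewrite pairingNl /=; lra.
have [m em] := lat_int LO cS Llam.
have cuS : c *m u \in Sigma by apply: (rowW RD gu).
set k1 : int := m + if c *m u \in Splus then 0 else 1.
have hk1 : is_k c (xalcove Splus lam u) k1.
  move=> q [p [bp ->]]; rewrite pairingDr -pairingM em /k1; case: ifP => cP.
    by have := bp _ cP; rewrite addr0; lra.
  have := bp _ (neg_pos RD cuS (negbT cP)); rewrite pairingNl intrD; lra.
have le := JW b bP bn _ _ hk1 hk2.
have ne := shr c cS _ _ hk1 hk2.
have k1p : (1 <= k1)%R.
  move: le ne; rewrite /k2; case: ifP => _; lia.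
have xq0 : xalcove Splus lam u (lam + u *m p0) by exists p0.
have cq0 : 0 < pairing c (lam + u *m p0).
  have [h _] := hk1 _ xq0.
  have : (1 : R) <= k1%:~R by rewrite -(ler_int R) in k1p.
  lra.
have cvS : c *m v \in Sigma by apply: (rowW RD gv).
rewrite mulmxA -/c; apply/negPn/negP => cvn.
have := dom _ xq0 _ (neg_pos RD cvS cvn).
rewrite pairingNl pairingM mulmxA mulmxV ?mul1mx; first lra.
exact: (gen_by_unit W2 gv).
Qed.
Theorem proposition4p1p1 (R : realType) (n : nat)
  (Sigma : seq 'rV[R]_n) (cor : 'rV[R]_n -> 'cV[R]_n) (Splus S : seq 'rV[R]_n)
  (L : 'cV[R]_n -> Prop) (theta : 'M[R]_n) :
  root_datum Sigma cor Splus S ->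
  lattice_ok Sigma cor L ->
  frobenius_ok Sigma cor Splus L theta ->
  forall (lam : 'cV[R]_n) (u : 'M[R]_n),
    L lam -> inW Sigma cor u ->
    shrunken Sigma Splus lam u ->
  forall (J : seq 'rV[R]_n) (w : 'M[R]_n),
    {subset J <= S} ->
    [seq j *m invmx theta | j <- J] =i J ->
    inW Sigma cor w ->
    JWdelta_alcove cor Splus theta J w lam u ->
  forall v : 'M[R]_n,
    inW Sigma cor v ->
    (forall q, xalcove Splus lam u q -> dominant Splus (invmx v *m q)) ->
    gen_by J cor (eta_delta theta u v).
Proof.
move=> RD LO FO lam u Llam gu shr J w sJ Js gw [g1 JW2] v gv dom.
have W2 := rd_two RD.
have WJ2 : forall a, a \in J -> pairing a (cor a) = 2.
  by move=> a aJ; apply: W2; apply: (simple_root RD (sJ _ aJ)).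
have uw := gen_by_unit W2 gw; have uv := gen_by_unit W2 gv.
have ut := frob_unit FO.
set y := invmx w *m v.
have gy : gen_by Sigma cor y by apply: gen_by_mul => //; apply: gen_by_inv.
have yJ : gen_by J cor y.
  apply: (main_W RD sJ gy).
  exact: (alcove_key RD LO Llam gu shr JW2 gw gv dom).
have uy : y \in unitmx by rewrite unitmx_mul unitmx_inv uw uv.
have ev : v = w *m y by rewrite /y mulmxA mulmxV // mul1mx.
set g := invmx w *m u *m delta theta w.
have e : eta_delta theta u v =
   (invmx theta *m invmx y *m theta) *m (invmx theta *m g *m theta) *m y.
  rewrite /eta_delta /delta_inv /g /delta {1}ev invmx_mul // ev.
  rewrite -!mulmxA (mulmxA theta (invmx theta)) mulmxV // mul1mx.
  by rewrite (mulmxA (invmx theta) theta) mulVmx // mul1mx.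
rewrite e; apply: gen_by_mul => //; apply: gen_by_mul.
  by apply: (conj_theta RD FO sJ Js); apply: gen_by_inv.
exact: (conj_theta RD FO sJ Js).
Qed.
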